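(* Let $d\geq 1$, $n\geq 1$ and $r\geq 2$ be integers. Then $M''(n,r,d)\le \left\lfloor \frac{d(n-1)}{r-1}\right\rfloor$.
   Context: All measures are probability measures on $\mathbb{R}^d$ absolutely continuous with respect to Lebesgue measure. A partition of $\mathbb{R}^d$ into $n$ parts formed by iterated hyperplane cuts is an ordered tuple $(K_1,\dots,K_n)$ of closed convex sets (some possibly empty) obtained by starting from the single part $\mathbb{R}^d$ and repeatedly choosing one existing part $C$ and replacing it by $C\cap H^+$ and $C\cap H^-$, where $H^+,H^-$ are the two closed half-spaces of an affine hyperplane, until there are $n$ parts. $M''(n,r,d)$ is the largest integer $M''$ such that for any $M''$ measures $\mu_1,\dots,\mu_{M''}$ on $\mathbb{R}^d$ there is such a partition $(K_1,\dots,K_n)$ and a map $\ell\colon[n]\to[r]$ with $\mu_j\big(\bigcup_{i\in\ell^{-1}(s)}K_i\big)=\tfrac1r$ for all $1\le j\le M''$ and $1\le s\le r$. *)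

(* Defs.v *)
(* R^d is modelled as [d.-tuple R],
   carrying MathComp-Analysis' product sigma-algebra (generated by the
   coordinate projections), which is the Borel sigma-algebra of R^d. *)
From HB Require Import structures.
From mathcomp Require Import all_boot all_order all_algebra.
From mathcomp Require Import all_classical all_reals all_analysis.
Set Implicit Arguments. Unset Strict Implicit. Unset Printing Implicit Defensive.
Import Order.TTheory GRing.Theory Num.Theory.
Local Open Scope classical_set_scope.
Local Open Scope ring_scope.

Section Defs.
Variables (R : realType) (d : nat).
Notation Pt := (d.-tuple R).

Definition box (a b : Pt) : set Pt :=
  [set x | forall i : 'I_d, tnth a i <= tnth x i <= tnth b i].
Definition box_vol (a b : Pt) : R := \prod_(i < d) (tnth b i - tnth a i).

Definition lebesgue_null (A : set Pt) : Prop :=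
  forall e : R, 0 < e -> exists a b : nat -> Pt,
    [/\ (forall k i, tnth (a k) i <= tnth (b k) i),
        A `<=` \bigcup_k box (a k) (b k) &
        (\sum_(k <oo) (box_vol (a k) (b k))%:E < e%:E)%E].

Definition abs_cont (mu : probability Pt R) : Prop :=
  forall A : set Pt, measurable A -> lebesgue_null A -> mu A = 0%E.

Definition halfspace_pos (a : Pt) (c : R) : set Pt :=
  [set x | c <= \sum_(i < d) tnth a i * tnth x i].
Definition halfspace_neg (a : Pt) (c : R) : set Pt :=
  [set x | \sum_(i < d) tnth a i * tnth x i <= c].

Inductive cut_partition : seq (set Pt) -> Prop :=
  | cut_start : cut_partition [:: setT]
  | cut_step (s : seq (set Pt)) (i : nat) (a : Pt) (c : R) :
      cut_partition s -> (i < size s)%N -> (exists j, tnth a j != 0) ->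
      cut_partition (take i s ++
        [:: nth set0 s i `&` halfspace_pos a c;
            nth set0 s i `&` halfspace_neg a c] ++ drop i.+1 s).

Definition fair_split_property (n r M : nat) : Prop :=
  forall mu : 'I_M -> probability Pt R, (forall j, abs_cont (mu j)) ->
  exists K : seq (set Pt), [/\ cut_partition K, size K = n &
    exists l : 'I_n -> 'I_r, forall (j : 'I_M) (s : 'I_r),
      mu j (\bigcup_(i in [set i : 'I_n | l i = s]) nth set0 K i)
        = (r%:R^-1 : R)%:E].
End Defs.

(* Main.v *)
Require Import Defs.
From HB Require Import structures.
From mathcomp Require Import all_boot all_order all_algebra.
From mathcomp Require Import all_classical all_reals all_analysis.
From Stdlib Require List.
From mathcomp Require Import zify ring lra.
From Stdlib Require Import Lia.
Set Implicit Arguments. Unset Strict Implicit. Unset Printing Implicit Defensive.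
Import Order.TTheory GRing.Theory Num.Theory.
Local Open Scope classical_set_scope.
Local Open Scope ring_scope.

Section PU.
Variable R : realType.
Variable del : R.
Hypothesis del_gt0 : 0 < del.

Definition consT n (p : R * n.-tuple R) : n.+1.-tuple R := [tuple of p.1 :: p.2].

Lemma consT_mes n : measurable_fun setT (@consT n).
Proof. exact: measurable_cons. Qed.

HB.instance Definition _ n := isMeasurableFun.Build _ _ _ _ (@consT n) (@consT_mes n).

Lemma ltdel (x : R) : x < x + del.
Proof. by rewrite ltrDl. Qed.

Definition U1f (x : R) : set R -> \bar R := uniform_prob (ltdel x).
Section U1.
Variable x : R.
Let U10 : U1f x set0 = 0%E. Proof. exact: measure0. Qed.
Let U1ge0 A : (0 <= U1f x A)%E. Proof. exact: measure_ge0. Qed.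
Let U1sa : semi_sigma_additive (U1f x).
Proof. move=> F mF tF mUF; exact: (@measure_semi_sigma_additive _ _ _ (uniform_prob (ltdel x)) F mF tF mUF). Qed.
HB.instance Definition _ := isMeasure.Build _ _ _ (U1f x) U10 U1ge0 U1sa.
Let U1T : U1f x setT = 1%E. Proof. exact: probability_setT. Qed.
HB.instance Definition _ := Measure_isProbability.Build _ _ _ (U1f x) U1T.
End U1.
Definition U1 x : probability R R := U1f x.

Fixpoint PU (q : nat -> R) (n : nat) : probability (n.-tuple R) R :=
  match n return probability (n.-tuple R) R with
  | 0 => \d_([tuple] : 0.-tuple R)
  | n'.+1 => distribution ((U1 (q 0%N) \x PU (fun i => q i.+1) n')%E) (@consT n')
  end.

Definition rect n (f g : nat -> R) : set (n.-tuple R) :=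
  [set x | forall i : 'I_n, f i <= tnth x i <= g i].
Arguments rect : clear implicits.

Lemma rect_mes n f g : measurable (rect n f g).
Proof.
have -> : rect n f g = \bigcap_(i in [set: 'I_n]) ((fun x : n.-tuple R => tnth x i) @^-1` `[f i, g i]%classic).
  apply/seteqP; split => x /=.
    by move=> H i _ /=; rewrite in_itv /=; apply: H.
  by move=> H i; have := H i I; rewrite /= in_itv.
apply: fin_bigcap_measurable; first exact: finite_finset.
move=> i _; rewrite -[X in measurable X]setTI.
by apply: measurable_tnth => //; exact: measurable_itv.
Qed.

Lemma consT_rect n f g : @consT n @^-1` rect n.+1 f g =
  `[f 0%N, g 0%N]%classic `*` rect n (fun i => f i.+1) (fun i => g i.+1).
Proof.
apply/seteqP; split => [[x t]|[x t]] /=.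
  move=> H; split.
    by have := H ord0; rewrite /= in_itv /= (tnth_nth 0).
  move=> i; have := H (lift ord0 i); rewrite !(tnth_nth 0) /=.
  by rewrite /bump leq0n.
move=> [H1 H2] [[|i] Hi].
  by move: H1; rewrite /= in_itv /= (tnth_nth 0).
have Hi' : (i < n)%N by [].
have := H2 (Ordinal Hi'); by rewrite !(tnth_nth 0).
Qed.

Lemma PU_S q n A : PU q n.+1 A =
  ((U1 (q 0%N) \x PU (fun i => q i.+1) n) (@consT n @^-1` A))%E.
Proof. by []. Qed.

Lemma U1_itv_le x a b : a <= b -> (U1 x `[a, b]%classic <= ((b - a) / del)%:E)%E.
Proof.
move=> ab; rewrite /U1 /U1f /uniform_prob.
apply: (@le_trans _ _ (\int[lebesgue_measure]_(y in `[a, b]%classic) (del^-1)%:E))%E.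
  apply: (@ge0_le_integral _ _ _ lebesgue_measure _ (measurable_itv `[a, b])).
  - by move=> y _; rewrite lee_fin uniform_pdf_ge0 // ltdel.
  - by apply/measurable_realfun.measurable_EFinP/measurable_funTS; exact: measurable_uniform_pdf.
  - exact: measurable_cst.
  - move=> y _; rewrite lee_fin /uniform_pdf; case: ifPn => _.
      by rewrite addrAC subrr add0r.
    by rewrite invr_ge0 ltW.
rewrite integral_cst /=; last exact: measurable_itv.
rewrite lebesgue_measure_itv /= lte_fin.
case: ltgtP ab => // [ab _|-> _].
  by rewrite -EFinD -EFinM mulrC.
by rewrite subrr mul0r mule0.
Qed.

Lemma U1_supp x : U1 x `[x, x + del]%classic = 1%E.
Proof.
exact: (@integral_uniform_pdf1 R x (x + del) `[x, x + del]%classic (ltdel x)).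
Qed.

Lemma rect0 f g : rect 0 f g = setT.
Proof. by apply/seteqP; split => // x _ [] []. Qed.

Lemma PU_rect_le q n f g : (forall i, (i < n)%N -> f i <= g i) ->
  (PU q n (rect n f g) <= (\prod_(i < n) ((g i - f i) / del))%:E)%E.
Proof.
elim: n q f g => [|n IH] q f g fg.
  by rewrite rect0 big_ord0 probability_setT.
rewrite PU_S consT_rect (product_measure1E _ _ (measurable_itv _) (@rect_mes n _ _)).
rewrite big_ord_recl EFinM.
apply: lee_pmul => //.
- exact: U1_itv_le (fg 0%N isT).
- by apply: IH => i Hi; apply: fg.

Qed.

Lemma PU_supp q n : PU q n (rect n q (fun i => q i + del)) = 1%E.
Proof.
elim: n q => [|n IH] q.
  by rewrite rect0 probability_setT.
rewrite PU_S consT_rect (product_measure1E _ _ (measurable_itv _) (@rect_mes n _ _)).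
transitivity (1 * 1 : \bar R)%E; last exact: mule1.
congr (_ * _)%E; [exact: U1_supp | exact: IH].
Qed.

Lemma box_rect d (a b : d.-tuple R) :
  box a b = rect d (fun i => nth 0 a i) (fun i => nth 0 b i).
Proof.
apply/seteqP; split => x /= H i.
  by rewrite -!tnth_nth; apply: H.
have := H i; by rewrite !(tnth_nth 0).
Qed.

Lemma PU_abs_cont q d : abs_cont (PU q d).
Proof.
move=> A mA Hn; apply/eqP; rewrite eq_le measure_ge0 andbT.
apply/lee_addgt0Pr => e e0; rewrite add0e.
have c0 : 0 < del ^+ d by rewrite exprn_gt0.
have [a [b [ab cov sm]]] := Hn (e * del ^+ d) (mulr_gt0 e0 c0).
have mF : forall k, measurable (box (a k) (b k)).
  by move=> k; rewrite box_rect; exact: rect_mes.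
apply: le_trans (@measure_sigma_subadditive _ _ _ (PU q d) _ _ mF mA cov) _.
apply: (@le_trans _ _ (\sum_(k <oo) ((del ^+ d)^-1)%:E * (box_vol (a k) (b k))%:E)%E).
  apply: lee_nneseries => [k _ _|k _]; first exact: measure_ge0.
  rewrite box_rect -EFinM; apply: le_trans (PU_rect_le _ _) _.
    by move=> i Hi; have := ab k (Ordinal Hi); rewrite !(tnth_nth 0).
  rewrite lee_fin /box_vol le_eqVlt; apply/orP; left; apply/eqP.
  rewrite big_split /= prodr_const card_ord exprVn mulrC; congr (_ * _).
  by apply: eq_bigr => i _; rewrite !(tnth_nth 0).
rewrite nneseriesZl; last first.
  move=> k _; rewrite lee_fin /box_vol; apply: prodr_ge0 => i _.
  by rewrite subr_ge0; apply: ab.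
apply: le_trans (_ : ((del ^+ d)^-1)%:E * (e * del ^+ d)%:E <= _)%E.
  by apply: lee_wpmul2l; [rewrite lee_fin invr_ge0 ltW | exact: ltW].
by rewrite -EFinM mulrCA mulVf ?mulr1 // gt_eqF.
Qed.

Lemma PU_meets q d (H : set (d.-tuple R)) : measurable H -> PU q d H != 0%E ->
  exists x, H x /\ rect d q (fun i => q i + del) x.
Proof.
move=> mH H0; case: (pselect (exists x, H x /\ rect d q (fun i => q i + del) x)) => // nex.
exfalso; move/eqP: H0; apply; apply/le_anti; rewrite measure_ge0 andbT.
have mS := @rect_mes d q (fun i => q i + del).
apply: (@le_trans _ _ (PU q d (~` rect d q (fun i => q i + del)))).
  apply: le_measure; rewrite ?inE //; first exact: measurableC.
  by move=> x Hx Sx; apply: nex; exists x.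
by rewrite probability_setC // PU_supp subee.
Qed.
End PU.

Section Cuts.
Variables (R : realType) (d M : nat) (mu : 'I_M -> probability (d.-tuple R) R).

Definition pos j (A : set (d.-tuple R)) : bool := (mu j A != 0)%E.
Definition splits j (h : d.-tuple R * R) : bool :=
  pos j (halfspace_pos h.1 h.2) && pos j (halfspace_neg h.1 h.2).

Lemma lin_mes (a : d.-tuple R) :
  measurable_fun setT (fun x : d.-tuple R => \sum_(i < d) tnth a i * tnth x i).
Proof.
apply: measurable_sum => i; apply: measurable_realfun.measurable_funM.
  exact: measurable_cst.
exact: measurable_tnth.
Qed.

Lemma hpos_mes (a : d.-tuple R) (c : R) : measurable (halfspace_pos a c).
Proof.
have -> : halfspace_pos a c = setT `&` ((fun x : d.-tuple R => \sum_(i < d) tnth a i * tnth x i) @^-1` `[c, +oo[%classic).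
  apply/seteqP; split => x /=; rewrite in_itv /= andbT //; by case.
exact: (lin_mes a measurableT (measurable_itv _)).
Qed.

Lemma hneg_mes (a : d.-tuple R) (c : R) : measurable (halfspace_neg a c).
Proof.
have -> : halfspace_neg a c = setT `&` ((fun x : d.-tuple R => \sum_(i < d) tnth a i * tnth x i) @^-1` `]-oo, c]%classic).
  apply/seteqP; split => x /=; rewrite in_itv /= //; by case.
exact: (lin_mes a measurableT (measurable_itv _)).
Qed.

Lemma pos_sub j (A B : set (d.-tuple R)) : measurable A -> measurable B -> A `<=` B -> pos j A -> pos j B.
Proof.
move=> mA mB AB; apply: contra => /eqP B0; apply/eqP/le_anti.
rewrite measure_ge0 andbT -B0; apply: le_measure => //; by rewrite inE.
Qed.
End Cuts.

Lemma Forall_take T (P : T -> Prop) (s : seq T) i : List.Forall P s -> List.Forall P (take i s).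
Proof.
elim: s i => [|x s IH] i h; first by case: i.
case: i => [|i] /=; first by constructor.
inversion h; subst; constructor => //; exact: IH.
Qed.

Lemma Forall_drop T (P : T -> Prop) (s : seq T) i : List.Forall P s -> List.Forall P (drop i s).
Proof.
elim: s i => [|x s IH] i h; first by case: i.
case: i => [|i] //=; inversion h; subst; exact: IH.
Qed.

Lemma Forall_cat T (P : T -> Prop) (s t : seq T) : List.Forall P s -> List.Forall P t -> List.Forall P (s ++ t).
Proof. elim: s => [|x s IH] //= h1 h2; inversion h1; subst; constructor => //; exact: IH. Qed.

Lemma Forall_nth T (P : T -> Prop) x0 (s : seq T) i : List.Forall P s -> P x0 -> P (nth x0 s i).
Proof.
elim: s i => [|x s IH] i h h0; first by case: i.
inversion h; subst; case: i => [|i] //=; exact: IH.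
Qed.

Section Cuts2.
Variables (R : realType) (d M : nat) (mu : 'I_M -> probability (d.-tuple R) R).

Lemma cut_mes (K : seq (set (d.-tuple R))) : cut_partition K -> List.Forall measurable K.
Proof.
elim => [|s i a c hs IH hi ha]; first by constructor.
apply: Forall_cat; first exact: Forall_take.
have mC : measurable (nth set0 s i) := @Forall_nth _ _ set0 _ i IH measurable0.
apply: Forall_cat; last exact: Forall_drop.
constructor; [apply: measurableI => //; exact: hpos_mes|].
constructor; [apply: measurableI => //; exact: hneg_mes|constructor].
Qed.

Lemma cut_count (K : seq (set (d.-tuple R))) : cut_partition K ->
  exists hs : seq (d.-tuple R * R),
  [/\ size hs = (size K).-1, all (fun h => [exists i, tnth h.1 i != 0]) hs &
      forall j, (count (pos mu j) K <= 1 + count (splits mu j) hs)%N].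
Proof.
move=> hK; have := cut_mes hK; elim: hK => [|s i a c hs IH hi ha] hm.
  exists [::]; split => // j /=.
  by case: (pos mu j setT).
have hms : List.Forall measurable s by exact: cut_mes hs.
have [hl [Hsz Hall Hc]] := IH hms.
exists ((a, c) :: hl); split.
- rewrite /= Hsz !size_cat size_take hi /= size_drop.
  have : (0 < size s)%N by apply: leq_ltn_trans hi.
  lia.
- rewrite /= Hall andbT; case: ha => k hk; apply/existsP; by exists k.
move=> j; have := Hc j.
rewrite -{1}(cat_take_drop i s) (drop_nth set0 hi) !count_cat /= addn0.
set C := nth set0 s i.
have mC : measurable C := @Forall_nth _ _ set0 _ i hms measurable0.
have mP := hpos_mes a c; have mN := hneg_mes a c.
have p1 : pos mu j (C `&` halfspace_pos a c) -> pos mu j C /\ pos mu j (halfspace_pos a c).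
  move=> h; split; apply: pos_sub h => //; try exact: measurableI.
have p2 : pos mu j (C `&` halfspace_neg a c) -> pos mu j C /\ pos mu j (halfspace_neg a c).
  move=> h; split; apply: pos_sub h => //; try exact: measurableI.
rewrite /splits /=.
move: p1 p2.
set x1 := pos mu j (C `&` halfspace_pos a c).
set x2 := pos mu j (C `&` halfspace_neg a c).
set c0 := pos mu j C.
set hp := pos mu j (halfspace_pos a c).
set hn := pos mu j (halfspace_neg a c).
set A := count _ (take i s). set B := count _ (drop i.+1 s). set D := count _ hl.
case: x1; case: x2; case: c0; case: hp; case: hn => p1 p2 /=;
  try (have [] := p1 isT => //); try (have [] := p2 isT => //); lia.
Qed.
End Cuts2.

Lemma count_card T (x0 : T) (s : seq T) (p : pred T) :
  count p s = #|[pred i : 'I_(size s) | p (nth x0 s i)]|.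
Proof. by rewrite -sum1_count (big_nth x0) big_mkord sum1_card. Qed.

Section Fair.
Variables (R : realType) (d M r : nat) (mu : 'I_M -> probability (d.-tuple R) R).

Lemma fair_count (K : seq (set (d.-tuple R))) (l : 'I_(size K) -> 'I_r) j :
  (0 < r)%N -> (forall i, measurable (nth set0 K i)) ->
  (forall s, mu j (\bigcup_(i in [set i | l i = s]) nth set0 K i) = (r%:R^-1 : R)%:E) ->
  (r <= count (pos mu j) K)%N.
Proof.
move=> r0 mK Hs.
have ex s : exists i, l i = s /\ pos mu j (nth set0 K i).
  case: (pselect (exists i, l i = s /\ pos mu j (nth set0 K i))) => // H0; exfalso.
  pose F k := if [exists i : 'I_(size K), (val i == k) && (l i == s)] then nth set0 K k else set0.
  have mF : forall k, `I_(size K) k -> measurable (F k).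
    by move=> k _; rewrite /F; case: ifP.
  set U := \bigcup_(i in [set i | l i = s]) nth set0 K i.
  have mU : measurable U by apply: fin_bigcup_measurable; [exact: finite_finset|].
  have sub : U `<=` \big[setU/set0]_(k < size K) F k.
    rewrite -bigcup_mkord => x [i /= lis Kx]; exists (val i) => //=.
    rewrite /F; case: ifPn => //; rewrite negb_exists => /forallP /(_ i).
    by rewrite eqxx lis eqxx.
  have := @content_subadditive _ _ _ (mu j) U F (size K) mF mU sub.
  rewrite big1; last first.
    move=> k _; rewrite /F; case: ifP => [/existsP [i /andP [/eqP <- /eqP lis]]|_].
      apply/eqP; apply: negbNE; apply/negP => hp; apply: H0; by exists i.
    exact: measure0.
  move=> h; have e : mu j U = (r%:R^-1 : R)%:E by exact: Hs.
  have h2 : (mu j U <= 0)%E := h.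
  move: h2; rewrite e lee_fin invr_le0 lern0 => /eqP r00; by rewrite r00 in r0.
have [g Hg] := choice ex.
have ginj : injective g.
  by move=> s1 s2 e; rewrite -(Hg s1).1 -(Hg s2).1 e.
rewrite (count_card set0).
apply: leq_trans (_ : #|g @: [set: 'I_r]%SET| <= _)%N.
  by rewrite card_imset // cardsT card_ord.
apply: subset_leq_card; apply/fintype.subsetP => i /imsetP [s _ ->].
by rewrite inE (Hg s).2.
Qed.
End Fair.

Section Geo.
Variables (R : realType) (d M : nat).

Definition Vm (f : 'I_d.+1 -> 'I_M) : 'M[R]_d.+1 := \matrix_(k, l) ((f k : nat)%:R ^+ l).
Definition Cst : R := \sum_(f : {ffun 'I_d.+1 -> 'I_M})
   \sum_(l < d.+1) \sum_(k < d.+1) `|invmx (Vm f) l k|.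
Definition delta : R := (Cst + 1)^-1.
Definition qq (j : nat) : nat -> R := fun i => (j%:R : R) ^+ i.+1.

Lemma Cst_ge0 : 0 <= Cst.
Proof. by apply: sumr_ge0 => f _; apply: sumr_ge0 => l _; apply: sumr_ge0. Qed.

Lemma delta_gt0 : 0 < delta.
Proof. by rewrite /delta invr_gt0 ltr_wpDl // Cst_ge0. Qed.

Lemma Cst_delta : Cst * delta < 1.
Proof.
have h := Cst_ge0; rewrite /delta ltr_pdivrMr ?mul1r; first by rewrite ltrDl.
by rewrite ltr_wpDl.
Qed.

Lemma Cst_f (f : 'I_d.+1 -> 'I_M) :
  \sum_(l < d.+1) \sum_(k < d.+1) `|invmx (Vm f) l k| <= Cst.
Proof.
rewrite /Cst (bigD1 (finfun f)) //=.
have -> : Vm (finfun f) = Vm f by apply/matrixP => k l; rewrite !mxE ffunE.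
rewrite lerDl; apply: sumr_ge0 => g _; apply: sumr_ge0 => l _; exact: sumr_ge0.
Qed.

Lemma Vm_unit (f : 'I_d.+1 -> 'I_M) : injective f -> Vm f \in unitmx.
Proof.
move=> finj; rewrite unitmxE unitfE.
have -> : Vm f = (Vandermonde d.+1 (\row_k ((f k : nat)%:R : R)))^T.
  by apply/matrixP => k l; rewrite !mxE.
rewrite det_tr det_Vandermonde; apply/prodf_neq0 => i _; apply/prodf_neq0 => j ij.
rewrite !mxE subr_eq0 eqr_nat; apply/negP => /eqP /val_inj /finj e.
by rewrite e ltnn in ij.
Qed.

Lemma GL (f : 'I_d.+1 -> 'I_M) (a : d.-tuple R) (c : R) (z : 'I_d.+1 -> d.-tuple R) :
  injective f -> (exists i, tnth a i != 0) ->
  (forall k (i : 'I_d), qq (f k) i <= tnth (z k) i <= qq (f k) i + delta) ->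
  (forall k, \sum_(i < d) tnth a i * tnth (z k) i = c) -> False.
Proof.
move=> finj [i0 ai0] zS zH.
set V := Vm f.
pose v : 'cV[R]_d.+1 := \col_l (if (l : nat) is 0 then - c else nth 0 a l.-1).
pose N' := \sum_(i < d) `|tnth a i|.
have N'0 : 0 < N'.
  rewrite /N' (bigD1 i0) //=; apply: ltr_pwDl; first by rewrite normr_gt0.
  exact: sumr_ge0.
have wb : forall k, `|(V *m v) k 0| <= delta * N'.
  move=> k; rewrite mxE big_ord_recl /= !mxE expr0 mul1r.
  have -> : \sum_(i < d) V k (lift ord0 i) * v (lift ord0 i) 0 =
            \sum_(i < d) tnth a i * qq (f k) i.
    apply: eq_bigr => i _; rewrite !mxE /= (tnth_nth 0) mulrC /qq.
    by rewrite /bump leq0n.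
  rewrite -(zH k) -sumrN -big_split /=.
  apply: le_trans (ler_norm_sum _ _ _) _.
  rewrite /N' mulr_sumr; apply: ler_sum => i _.
  rewrite addrC -mulrBr normrM mulrC; apply: ler_wpM2r => //.
  have := zS k i; case/andP => h1 h2.
  rewrite ler_norml; apply/andP; split; lra.
have vb : forall l, `|v l 0| <= (\sum_k `|invmx V l k|) * (delta * N').
  move=> l.
  have -> : v = invmx V *m (V *m v) by rewrite mulKmx //; exact: Vm_unit.
  rewrite mxE; apply: le_trans (ler_norm_sum _ _ _) _; rewrite mulr_suml.
  apply: ler_sum => k _; rewrite normrM; apply: ler_wpM2l => //; exact: wb.
have h1 : N' <= \sum_l `|v l 0|.
  rewrite big_ord_recl /= /N'; apply: ler_wpDl => //.
  apply: ler_sum => i _; by rewrite !mxE /= add0n (tnth_nth 0).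
have h2 : \sum_l `|v l 0| <= Cst * delta * N'.
  apply: le_trans (ler_sum _ (fun l _ => vb l)) _.
  rewrite -mulr_suml mulrA; apply: ler_wpM2r; first exact: ltW.
  apply: ler_wpM2r; first exact: ltW delta_gt0.
  exact: Cst_f.
have := le_trans h1 h2; have := Cst_delta; nra.
Qed.
End Geo.

Lemma hit (R : realType) (d : nat) (f g : nat -> R) (a : d.-tuple R) (c : R) (x y : d.-tuple R) :
  rect f g x -> rect f g y -> c <= \sum_(i < d) tnth a i * tnth x i ->
  \sum_(i < d) tnth a i * tnth y i <= c ->
  exists z, rect f g z /\ \sum_(i < d) tnth a i * tnth z i = c.
Proof.
move=> hx hy cx cy.
set lx := \sum_(i < d) tnth a i * tnth x i in cx *.
set ly := \sum_(i < d) tnth a i * tnth y i in cy *.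
case: (eqVneq lx ly) => e.
  by exists x; split => //; rewrite -/lx; lra.
have lt : ly < lx by rewrite lt_neqAle eq_sym e /=; apply: le_trans cx.
pose lam := (c - ly) / (lx - ly).
have l0 : 0 <= lam by rewrite divr_ge0 // subr_ge0 // ltW.
have l1 : lam <= 1 by rewrite ler_pdivrMr ?subr_gt0 // mul1r lerB.
exists [tuple tnth y i + lam * (tnth x i - tnth y i) | i < d]; split.
  move=> i; rewrite tnth_mktuple; have := hx i; have := hy i.
  case/andP => h1 h2; case/andP => h3 h4; apply/andP; split; nra.
have -> : \sum_(i < d) tnth a i * tnth [tuple tnth y i + lam * (tnth x i - tnth y i) | i < d] i
   = ly + lam * (lx - ly).
  rewrite /lx /ly mulrBr !mulr_sumr -sumrB -big_split /=; apply: eq_bigr => i _.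
  rewrite tnth_mktuple; ring.
rewrite /lam mulrAC -mulrA mulfV ?mulr1; first ring.
by rewrite subr_eq0.
Qed.

Section Final.
Variables (R : realType) (d M : nat).

Definition mus (j : 'I_M) : probability (d.-tuple R) R :=
  PU (delta_gt0 R d M) (qq R j) d.

Lemma split_bound (a : d.-tuple R) (c : R) : (exists i, tnth a i != 0) ->
  (#|[pred j | splits mus j (a, c)]| <= d)%N.
Proof.
move=> ha; rewrite leqNgt; apply/negP => H.
set A := [pred j | splits mus j (a, c)] in H.
pose f (k : 'I_d.+1) : 'I_M := @enum_val _ (mem A) (widen_ord H k).
have finj : injective f.
  by move=> k1 k2 /enum_val_inj /(congr1 val) /= /val_inj.
have ex : forall k, exists z, rect (n:=d) (qq R (f k)) (fun i => qq R (f k) i + delta R d M) z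
    /\ \sum_(i < d) tnth a i * tnth z i = c.
  move=> k; have := @enum_valP _ (mem A) (widen_ord H k); rewrite -/(f k).
  rewrite inE /splits /= => /andP [hp hn].
  have [x [Hx Sx]] := PU_meets (hpos_mes a c) hp.
  have [y [Hy Sy]] := PU_meets (hneg_mes a c) hn.
  exact: hit Sx Sy Hx Hy.
have [z Hz] := choice ex.
apply: (GL finj ha (z := z)).
  by move=> k i; exact: (Hz k).1 i.
by move=> k; exact: (Hz k).2.
Qed.

Lemma count_sum T (p : pred T) (s : seq T) : count p s = \sum_(x <- s) (p x : nat).
Proof. by elim: s => [|x s IH]; rewrite ?big_nil ?big_cons //= IH. Qed.

End Final.

Lemma sum_bool_card (T : finType) (P : pred T) : (\sum_(j : T) (P j : nat) = #|P|)%N.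
Proof. rewrite -sum1_card [RHS]big_mkcond /=; apply: eq_bigr => j _; by rewrite unfold_in; case: (P j). Qed.

Lemma sum_const_seq T (s : seq T) (c : nat) : (\sum_(x <- s) c = size s * c)%N.
Proof. by elim: s => [|x s IH]; rewrite ?big_nil ?big_cons //= IH mulSn. Qed.

Theorem mainTheorem3 (R : realType) (d n r : nat) :
  (1 <= d)%N -> (1 <= n)%N -> (2 <= r)%N ->
  forall M : nat, fair_split_property R d n r M ->
  (M <= (d * (n - 1)) %/ (r - 1))%N.
Proof.
move=> d1 n1 r2 M Hfs.
have [K [hK hsz [l Hl]]] := Hfs (@mus R d M) (fun j => @PU_abs_cont R _ (delta_gt0 R d M) (qq R j) d).
subst n.
have [hs [hsz' hall hc]] := cut_count (@mus R d M) hK.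
have mK : forall i, measurable (nth set0 K i) :=
  fun i => @Forall_nth _ _ set0 _ i (cut_mes hK) measurable0.
have Hj : forall j, (r <= 1 + count (splits (@mus R d M) j) hs)%N.
  move=> j; apply: leq_trans (hc j); apply: (fair_count (l:=l)) => //; first lia.
have S1 : (\sum_(j < M) r <= \sum_(j < M) (1 + count (splits (@mus R d M) j) hs))%N.
  by apply: leq_sum => j _; exact: Hj.
rewrite big_split /= !sum_nat_const card_ord in S1.
have S2 : (\sum_(j < M) count (splits (@mus R d M) j) hs <= size hs * d)%N.
  under eq_bigr => j _ do rewrite count_sum.
  rewrite exchange_big /=.
  apply: leq_trans (_ : \sum_(h <- hs) d <= _)%N; last by rewrite sum_const_seq.
  rewrite big_seq_cond [X in (_ <= X)%N]big_seq_cond; apply: leq_sum => -[a c] /andP [hin _].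
  rewrite sum_bool_card; apply: split_bound.
  by have := allP hall _ hin => /existsP [i hi]; exists i.
rewrite leq_divRL; last lia.
rewrite hsz' in S2.
have S := leq_trans S1 (leq_add (leqnn _) S2).
rewrite mulnBr muln1 mulnC.
move: S; case: (size K) => [|k] /=; rewrite ?subn1 /=; lia.
Qed.
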